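(* For every $m\ge0$, substituting $\lambda_i=q^{-2(i-1)}$, $i=1,\dots,n$, into $\vartheta_m(q^{-2},\lambda)$ gives $\hat n$.
   Context: $\hat m=\frac{1-q^{-2m}}{1-q^{-2}}$. For indeterminates $\lambda=(\lambda_1,\dots,\lambda_n)$ and $m\ge1$, $\vartheta_m(q^{-2},\lambda)=\sum_{\ell=1}^n(1-q^{-2})^{\ell-1}\sum_{\mathbf d}\sum_{1\le j_1<\dots<j_\ell\le n}\lambda_{j_1}^{d_1}\cdots\lambda_{j_\ell}^{d_\ell}$, where $\mathbf d=(d_1,\dots,d_\ell)$ runs over $\ell$-tuples of positive integers with sum $m$; $\vartheta_0(q^{-2},\lambda)=\hat n$. *)

(* Defs.v *)
From mathcomp Require Import all_boot all_order all_algebra.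
Set Implicit Arguments. Unset Strict Implicit. Unset Printing Implicit Defensive.
Import Order.TTheory GRing.Theory Num.Theory.
Local Open Scope ring_scope.

(* hat m = (1 - t^m)/(1 - t), where t plays the role of q^{-2}. *)
Definition qhat {F : fieldType} (t : F) (m : nat) : F := (1 - t ^+ m) / (1 - t).

Definition is_composition (m l : nat) (d : {ffun 'I_l -> 'I_m.+1}) : bool :=
  [forall k, (0 < d k)%N] && ((\sum_(k < l) (d k : nat))%N == m).

Definition is_increasing (n l : nat) (j : {ffun 'I_l -> 'I_n}) : bool :=
  [forall k1 : 'I_l, forall k2 : 'I_l, (k1 < k2)%N ==> (j k1 < j k2)%N].

(* vartheta_m(t, lambda), lambda = (lambda_1..lambda_n) stored 0-indexed. *)
Definition vartheta {F : fieldType} (t : F) (n : nat) (lam : 'I_n -> F) (m : nat) : F :=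
  if m == 0%N then qhat t n else
  \sum_(1 <= l < n.+1) (1 - t) ^+ l.-1 *
    \sum_(d : {ffun 'I_l -> 'I_m.+1} | is_composition d)
      \sum_(j : {ffun 'I_l -> 'I_n} | is_increasing j)
        \prod_(k < l) lam (j k) ^+ (d k).

(* Main.v *)
Require Import Defs.
From mathcomp Require Import all_boot all_order all_algebra.
Set Implicit Arguments. Unset Strict Implicit. Unset Printing Implicit Defensive.
Import Order.TTheory GRing.Theory Num.Theory.

Definition ordlt {N} : rel 'I_N := fun a b => (a < b)%N.

Lemma ordlt_trans N : transitive (@ordlt N).
Proof. move=> a b c; rewrite /ordlt; exact: ltn_trans. Qed.

Lemma ordlt_irr N : irreflexive (@ordlt N).
Proof. by move=> a; rewrite /ordlt ltnn. Qed.

Lemma sorted_enum_ord N : sorted (@ordlt N) (enum 'I_N).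
Proof.
have := iota_ltn_sorted 0 N; rewrite -val_enum_ord sorted_map.
by [].
Qed.

Lemma sorted_enumA N (A : {pred 'I_N}) : sorted (@ordlt N) (enum A).
Proof.
rewrite /enum_mem -enumT; apply: sorted_filter; first exact: ordlt_trans.
exact: sorted_enum_ord.
Qed.

From mathcomp Require Import ring.

Definition supp N M (c : {ffun 'I_N -> 'I_M.+1}) : {set 'I_N} := [set i | (0 < c i)%N].

Definition phi N M l (p : {ffun 'I_l -> 'I_M.+1} * {ffun 'I_l -> 'I_N}) : {ffun 'I_N -> 'I_M.+1} :=
  [ffun i => if [pick k | p.2 k == i] is Some k then p.1 k else ord0].

Definition psi N M l (c : {ffun 'I_N.+1 -> 'I_M.+1}) :
  {ffun 'I_l -> 'I_M.+1} * {ffun 'I_l -> 'I_N.+1} :=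
  let j := [ffun k : 'I_l => nth ord0 (enum (supp c)) k] in ([ffun k => c (j k)], j).

Lemma incr_inj N l (j : {ffun 'I_l -> 'I_N}) : is_increasing j -> injective j.
Proof.
move=> /forallP H a b E; case: (ltngtP a b) => [ab|ba|/val_inj //].
- by have := implyP (forallP (H a) b) ab; rewrite E ltnn.
- by have := implyP (forallP (H b) a) ba; rewrite E ltnn.
Qed.

Lemma phi_at N M l (d : {ffun 'I_l -> 'I_M.+1}) (j : {ffun 'I_l -> 'I_N}) :
  is_increasing j -> forall k, phi (d, j) (j k) = d k.
Proof.
move=> /incr_inj ij k; rewrite /phi ffunE /=.
case: pickP => [k' /eqP /ij -> //|/(_ k)]; by rewrite eqxx.
Qed.

Lemma phi_off N M l (d : {ffun 'I_l -> 'I_M.+1}) (j : {ffun 'I_l -> 'I_N}) i :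
  (forall k, j k != i) -> phi (d, j) i = ord0.
Proof.
move=> H; rewrite /phi ffunE /=; case: pickP => [k' /= E|//].
by have := H k'; rewrite E.
Qed.

Lemma supp_phi N M l (d : {ffun 'I_l -> 'I_M.+1}) (j : {ffun 'I_l -> 'I_N}) :
  is_composition d -> is_increasing j -> supp (phi (d, j)) = [set j k | k in 'I_l].
Proof.
move=> /andP[/forallP dpos _] ij; apply/setP => i; rewrite inE.
apply/idP/imsetP.
- move=> H; case: (pickP (fun k => j k == i)) => [k /eqP <-|H2]; first by exists k.
  by rewrite phi_off in H => // k; rewrite H2.
- by move=> [k _ ->]; rewrite phi_at.
Qed.

Lemma enum_supp_phi N M l (d : {ffun 'I_l -> 'I_M.+1}) (j : {ffun 'I_l -> 'I_N}) :
  is_composition d -> is_increasing j ->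
  enum (supp (phi (d, j))) = map j (enum 'I_l).
Proof.
move=> dc ji; apply: (irr_sorted_eq (@ordlt_trans N) (@ordlt_irr N)).
- exact: sorted_enumA.
- apply: homo_sorted; last exact: sorted_enum_ord.
  move=> a b ab; exact: (implyP (forallP (forallP ji a) b) ab).
- move=> x; rewrite mem_enum supp_phi //; apply/imsetP/mapP.
  + by move=> [k _ ->]; exists k; rewrite ?mem_enum.
  + by move=> [k _ ->]; exists k.
Qed.

Lemma psi_phi N M l (d : {ffun 'I_l -> 'I_M.+1}) (j : {ffun 'I_l -> 'I_N.+1}) :
  is_composition d -> is_increasing j -> psi l (phi (d, j)) = (d, j).
Proof.
move=> dc ji.
have ej : [ffun k : 'I_l => nth ord0 (enum (supp (phi (d, j)))) k] = j.
  apply/ffunP => k; rewrite ffunE enum_supp_phi // (nth_map k) ?size_enum_ord //.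
  by rewrite nth_ord_enum.
rewrite /psi /= ej; congr pair; apply/ffunP => k; rewrite ffunE.
exact: phi_at.
Qed.

Lemma sum_supp N M (c : {ffun 'I_N -> 'I_M.+1}) :
  (\sum_(i in supp c) (c i : nat) = \sum_i (c i : nat))%N.
Proof.
apply: big_rmcond => i; rewrite inE -eqn0Ngt => /eqP -> //.
Qed.

Lemma P_phi N M l (d : {ffun 'I_l -> 'I_M.+1}) (j : {ffun 'I_l -> 'I_N}) :
  is_composition d -> is_increasing j ->
  ((\sum_i (phi (d, j) i : nat))%N == M) && (#|supp (phi (d, j))| == l).
Proof.
move=> dc ji; have ij := incr_inj ji.
rewrite -sum_supp supp_phi // card_imset // card_ord eqxx andbT.
rewrite big_imset /=; last by move=> a b _ _ /ij.
under eq_bigr => k _ do rewrite phi_at //.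
by case/andP: dc.
Qed.

Lemma psi_props N M l (c : {ffun 'I_N.+1 -> 'I_M.+1}) :
  ((\sum_i (c i : nat))%N == M) && (#|supp c| == l) ->
  [&& is_composition (psi l c).1, is_increasing (psi l c).2 & phi (psi l c) == c].
Proof.
move=> /andP[/eqP sc /eqP cl].
set s := enum (supp c).
have ss : size s = l by rewrite -cardE.
have jin : forall k : 'I_l, nth ord0 s k \in supp c.
  by move=> k; rewrite -mem_enum; apply: mem_nth; rewrite ss.
have ji : is_increasing (psi l c).2.
  apply/forallP => a; apply/forallP => b; apply/implyP => ab; rewrite /= !ffunE.
  apply: (sorted_ltn_nth (@ordlt_trans _) ord0 (sorted_enumA _)) => //;
    by rewrite inE ss.
rewrite ji /=; apply/andP; split.
- apply/andP; split.
  + by apply/forallP => k; rewrite !ffunE; have := jin k; rewrite inE.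
  + apply/eqP; apply: etrans sc; rewrite -sum_supp.
    have -> : (\sum_(i in supp c) (c i : nat) = \sum_(i <- s) c i)%N by rewrite big_enum.
    rewrite (big_nth ord0) ss big_mkord.
    by apply: eq_bigr => k _; rewrite !ffunE.
- apply/eqP/ffunP => i; rewrite /phi ffunE /=.
  case: pickP => [k /eqP <-|H]; first by rewrite !ffunE.
  case: (boolP (i \in supp c)) => [iS|]; last first.
    by rewrite inE -eqn0Ngt => /eqP c0; apply: val_inj; rewrite /= c0.
  have ilt : (index i s < l)%N by rewrite -ss index_mem mem_enum.
  have := H (Ordinal ilt); rewrite /= ffunE /= nth_index ?eqxx // mem_enum //.
Qed.

Local Open Scope ring_scope.

Lemma comb (F : fieldType) N M l (lam : 'I_N.+1 -> F) :
  \sum_(d : {ffun 'I_l -> 'I_M.+1} | is_composition d)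
    \sum_(j : {ffun 'I_l -> 'I_N.+1} | is_increasing j) \prod_(k < l) lam (j k) ^+ (d k)
  = \sum_(c : {ffun 'I_N.+1 -> 'I_M.+1} | ((\sum_i (c i : nat))%N == M) && (#|supp c| == l))
      \prod_i lam i ^+ (c i).
Proof.
rewrite pair_big_dep /= [RHS](reindex_onto (@phi _ _ l) (psi l)) /=; last first.
  by move=> c /psi_props /and3P[_ _ /eqP].
apply: eq_big => [[d j]|[d j] /andP[/= dc ji]] /=.
- apply/idP/idP => [/andP[dc ji]|/andP[HP /eqP E]].
    by rewrite P_phi // psi_phi // eqxx.
  by move: (psi_props HP); rewrite E => /and3P[a b _]; rewrite a b.
- have -> : \prod_i lam i ^+ phi (d, j) i =
      \prod_(i in supp (phi (d, j))) lam i ^+ phi (d, j) i.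
    by rewrite [RHS]big_rmcond // => i; rewrite inE -eqn0Ngt => /eqP ->.
  rewrite supp_phi // big_imset /=; last by move=> a b _ _ /(incr_inj ji).
  by apply: eq_bigr => k _; rewrite phi_at.
Qed.

Definition gg (F : fieldType) (t : F) (i a : nat) : F :=
  (if (0 < a)%N then 1 - t else 1) * (t ^+ i) ^+ a.

Definition Qp (F : fieldType) (t : F) M (i : nat) : {poly F} :=
  \sum_(a < M.+1) gg t i a *: 'X^a.

Lemma coefQ (F : fieldType) (t : F) M i k : (k <= M)%N -> (Qp t M i)`_k = gg t i k.
Proof.
move=> kM; rewrite /Qp coef_sumMXn.
by rewrite (big_pred1 (Ordinal (kM : (k < M.+1)%N))) // => a; rewrite /= -val_eqE.
Qed.

Lemma aux1 (F : fieldType) (u : F) k :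
  (1 - u) * u ^+ k.+1 + (u - u ^+ k.+1) = u - u ^+ k.+2.
Proof. rewrite !exprS; ring. Qed.

Lemma geomS (F : fieldType) (u : F) k :
  (1 - u) * \sum_(j < k) u ^+ (k - j) = u - u ^+ k.+1.
Proof.
elim: k => [|k IH]; first by rewrite big_ord0 mulr0 expr1 subrr.
rewrite big_ord_recl subn0 /=.
under eq_bigr => j _ do rewrite /bump /= add1n subSS.
have E : forall S : F, (1 - u) * (u ^+ k.+1 + S) = (1 - u) * u ^+ k.+1 + (1 - u) * S.
  by move=> S; ring.
rewrite E IH; apply: aux1.
Qed.

Lemma aux2 (F : fieldType) (t : F) n S k :
  (1 - t ^+ n) * S = t ^+ n - (t ^+ n) ^+ k.+1 ->
  (1 - t) * (t ^+ n) ^+ k.+1 + ((1 - t ^+ n) * (1 - t) * S + (1 - t ^+ n)) = 1 - t ^+ n.+1.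
Proof.
move=> H.
have -> : (1 - t ^+ n) * (1 - t) * S = (1 - t) * ((1 - t ^+ n) * S) by ring.
rewrite H; move: (t ^+ n ^+ k.+1) => w; rewrite exprSr; move: (t ^+ n) => v; ring.
Qed.

Lemma coefP (F : fieldType) (t : F) M n k : (k <= M)%N ->
  (\prod_(i < n) Qp t M i)`_k = if k == 0%N then 1 else 1 - t ^+ n.
Proof.
elim: n k => [|n IH] k kM.
  by rewrite big_ord0 coef1 expr0 subrr; case: k {kM}.
rewrite big_ord_recr /= coefM.
case: k kM => [|k] kM.
  by rewrite big_ord1 IH // coefQ // /gg /= !mulr1.
rewrite big_ord_recl big_ord_recr /= IH // subn0 coefQ //.
rewrite IH // subnn coefQ // /gg /= !mulr1 !mul1r.
have -> : \sum_(i < k) (\prod_(i0 < n) Qp t M i0)`_(bump 0 (widen_ord (leqnSn k) i)) *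
    (Qp t M n)`_(k.+1 - bump 0 (widen_ord (leqnSn k) i)) =
  (1 - t ^+ n) * (1 - t) * \sum_(j < k) (t ^+ n) ^+ (k - j).
  rewrite mulr_sumr; apply: eq_bigr => j _.
  have jk : (j < k)%N := ltn_ord j.
  rewrite /bump /= add1n IH; last by apply: leq_trans kM; apply: ltnW.
  rewrite subSS coefQ; last by apply: leq_trans (leq_subr _ _) _; apply: ltnW.
  by rewrite /gg subn_gt0 jk /=; ring.
exact: aux2 (geomS _ _).
Qed.

Lemma expand (F : fieldType) (t : F) N M :
  (\prod_(i < N) Qp t M i)`_M =
  \sum_(c : {ffun 'I_N -> 'I_M.+1} | (\sum_i (c i : nat))%N == M) \prod_(i < N) gg t i (c i).
Proof.
rewrite /Qp bigA_distr_bigA /=.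
have E : forall c : {ffun 'I_N -> 'I_M.+1},
   \prod_(i < N) (gg t i (c i) *: 'X^(c i)) =
   (\prod_(i < N) gg t i (c i)) *: 'X^(\sum_(i < N) (c i : nat))%N.
  move=> c; rewrite -mul_polyC rmorph_prod -prodrXr -big_split /=.
  by apply: eq_bigr => i _; rewrite mul_polyC.
under eq_bigr => c _ do rewrite E.
by rewrite coef_sumMXn.
Qed.

Lemma weight (F : fieldType) (t : F) N M (c : {ffun 'I_N -> 'I_M.+1}) :
  \prod_(i < N) gg t i (c i) = (1 - t) ^+ #|supp c| * \prod_(i < N) (t ^+ i) ^+ (c i).
Proof.
rewrite /gg big_split /= -prodr_const big_mkcond /=; congr (_ * _).
by rewrite [RHS]big_mkcond; apply: eq_bigr => i _; rewrite inE.
Qed.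

Lemma main_t (F : fieldType) (t : F) N m : t != 1 ->
  vartheta t (fun i : 'I_N.+1 => t ^+ i) m = qhat t N.+1.
Proof.
move=> t1; have t1' : 1 - t != 0 by rewrite subr_eq0 eq_sym.
rewrite /vartheta; case: eqP => [//|m0].
apply: (mulfI t1'); rewrite /qhat [RHS]mulrC divfK // mulr_sumr.
under eq_bigr => l _ do rewrite (@comb F N m l (fun i : 'I_N.+1 => t ^+ i)).
have -> : \sum_(1 <= l < N.+2) (1 - t) * ((1 - t) ^+ l.-1 *
    \sum_(c : {ffun 'I_N.+1 -> 'I_m.+1} | ((\sum_i (c i : nat))%N == m) && (#|supp c| == l))
      \prod_(i < N.+1) (t ^+ i) ^+ (c i)) =
  \sum_(0 <= l < N.+2) (1 - t) ^+ l *
    \sum_(c : {ffun 'I_N.+1 -> 'I_m.+1} | ((\sum_i (c i : nat))%N == m) && (#|supp c| == l))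
      \prod_(i < N.+1) (t ^+ i) ^+ (c i).
  rewrite [RHS]big_ltn // [X in _ = _ * X + _]big1 ?mulr0 ?add0r; last first.
    move=> c /andP[/eqP sc /eqP s0]; exfalso; apply: m0.
    by rewrite -sc -sum_supp (cards0_eq s0) big_set0.
  apply: eq_big_nat => l /andP[l1 _].
  by rewrite mulrA -exprS prednK.
rewrite big_mkord.
transitivity (\sum_(c : {ffun 'I_N.+1 -> 'I_m.+1} | (\sum_i (c i : nat))%N == m)
   (1 - t) ^+ #|supp c| * \prod_(i < N.+1) (t ^+ i) ^+ (c i)).
  rewrite [RHS](partition_big (fun c => inord #|supp c| : 'I_N.+2) xpredT) //.
  apply: eq_bigr => l _; rewrite mulr_sumr; apply: eq_big => c.
    have cle : (#|supp c| < N.+2)%N by rewrite ltnS; have := max_card (supp c); rewrite card_ord.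
    by rewrite -val_eqE /= inordK.
  by move=> /andP[_ /eqP ->].
under eq_bigr => c _ do rewrite -weight.
by rewrite -expand coefP // (introF eqP m0).
Qed.

Unset Implicit Arguments.

Theorem lemma4p4 (F : fieldType) (q : F) (n m : nat) :
  q != 0 -> q ^- 2 != 1 -> (0 < n)%N ->
  vartheta (q ^- 2) (fun i : 'I_n => (q ^- 2) ^+ i) m = qhat (q ^- 2) n.
Proof.
move=> _ t1; case: n => [//|N] _; exact: main_t.
Qed.
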